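(* There exists an almost discrete Fréchet–Urysohn (Tychonoff) space $Z$ such that $Z\times Z$ is not a weakly Grothendieck space.
   Context: A space is almost discrete if it has exactly one non-isolated point. $C_p(X)$ is the space of continuous real-valued functions on $X$ with the pointwise convergence topology. A space $W$ is a $g$-space if every subset $A\subseteq W$ such that every infinite subset of $A$ has an accumulation point in $W$ has compact closure in $W$; $X$ is weakly Grothendieck if $C_p(X)$ is a $g$-space. *)

(* Defs.v *)
From HB Require Import structures.
From mathcomp Require Import all_boot all_order all_algebra.
From mathcomp Require Import all_classical all_reals all_analysis.

Set Implicit Arguments.
Unset Strict Implicit.
Unset Printing Implicit Defensive.
Import Order.TTheory GRing.Theory Num.Theory.
Import numFieldNormedType.Exports.
Local Open Scope classical_set_scope.
Local Open Scope ring_scope.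

(* Tychonoff space: completely regular and T1 (equivalently, given complete
   regularity, Hausdorff). *)
Definition tychonoff_space (T : topologicalType) : Prop :=
  completely_regular_space T /\ hausdorff_space T.

Definition almost_discrete (T : topologicalType) : Prop :=
  exists! z : T, ~ isolated [set: T] z.

Definition frechet_urysohn (T : topologicalType) : Prop :=
  forall (A : set T) (x : T), closure A x ->
    exists u : nat -> T, (forall n, A (u n)) /\ u @ \oo --> x.

Definition g_space (W : topologicalType) : Prop :=
  forall A : set W,
    (forall B : set W, B `<=` A -> infinite_set B ->
       exists x : W, limit_point B x) ->
    compact (closure A).

Definition Cp (R : realType) (X : topologicalType) : topologicalType :=
  set_type [set f : {ptws X -> R} | continuous (f : X -> R)].

Definition weakly_grothendieck (R : realType) (X : topologicalType) : Prop :=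
  g_space (Cp R X).

(* Main.v *)
Require Import Defs.
From HB Require Import structures.
From mathcomp Require Import all_boot all_order all_algebra.
From mathcomp Require Import all_classical all_reals all_analysis.
Set Implicit Arguments.
Unset Strict Implicit.
Unset Printing Implicit Defensive.
Import Order.TTheory GRing.Theory Num.Theory.
Import numFieldNormedType.Exports.
Local Open Scope classical_set_scope.
Definition fanT := option ((nat -> nat) * nat).
HB.instance Definition _ := Pointed.on fanT.

Definition fan_op (U : set fanT) : Prop :=
  U None -> exists h : (nat -> nat) -> nat, forall s m, (h s <= m)%N -> U (Some (s, m)).

Lemma fan_opT : fan_op setT.
Proof. by move=> _; exists (fun _ => 0%N). Qed.

Lemma fan_opI : setI_closed fan_op.
Proof.
move=> A B oA oB [/oA [h1 H1] /oB [h2 H2]].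
exists (fun s => maxn (h1 s) (h2 s)) => s m; rewrite geq_max => /andP[a b].
by split; [apply: H1|apply: H2].
Qed.

Lemma fan_op_bigU (I : Type) (f : I -> set fanT) : (forall i, fan_op (f i)) ->
  fan_op (\bigcup_i f i).
Proof.
move=> opf [i _ fi]; have [h H] := opf i fi.
by exists h => s m hm; exists i => //; apply: H.
Qed.

HB.instance Definition _ := isOpenTopological.Build fanT fan_opT fan_opI fan_op_bigU.

Lemma nbhs_Some (d : (nat -> nat) * nat) : nbhs (Some d : fanT) [set Some d].
Proof. by exists [set Some d]; split => //; move=> /= []. Qed.

Lemma nbhs_NoneP (V : set fanT) : nbhs (None : fanT) V <->
  (V None /\ exists h : (nat -> nat) -> nat, forall s m, (h s <= m)%N -> V (Some (s, m))).
Proof.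
split.
  move=> [B [oB BN BV]]; split; first exact: BV.
  by have [h H] := oB BN; exists h => s m hm; apply: BV; apply: H.
move=> [VN [h H]].
exists (fun x => x = None \/ exists s m, (h s <= m)%N /\ x = Some (s, m)); split.
- move=> _; exists h => s m hm; right; by exists s, m.
- by left.
- by move=> x [->|[s [m [hm ->]]]] //; apply: H.
Qed.

Lemma fan_openE (U : set fanT) : open U = fan_op U.
Proof. by []. Qed.

Lemma closure_fan (W : set fanT) : closure W `<=` W `|` [set None].
Proof.
move=> [d|] cW; last by right.
have [y [Wy yd]] := cW _ (nbhs_Some d); left; by rewrite -yd.
Qed.

Lemma closed_None (W : set fanT) : W None -> closed W.
Proof. by move=> WN x /closure_fan [//|->]. Qed.

Lemma open_noNone (W : set fanT) : ~ W None -> open W.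
Proof. by rewrite fan_openE => nW /nW. Qed.

Lemma nbhs_None_neq (d : (nat -> nat) * nat) :
  nbhs (None : fanT) [set x | x <> Some d].
Proof.
case: d => s0 m0; apply/nbhs_NoneP; split => //; exists (fun _ => m0.+1) => s m hm [_ md].
by move: hm; rewrite md ltnn.
Qed.

Lemma fan_hausdorff : hausdorff_space fanT.
Proof.
have key : forall d, ~ cluster (nbhs (Some d : fanT)) None.
  move=> d /(_ _ _ (nbhs_Some d) (nbhs_None_neq d)) [y [/= -> ]]; by [].
move=> [p|] [q|] //.
- by move=> /(_ _ _ (nbhs_Some p) (nbhs_Some q)) [y [/= -> [->]]].
- by move/key.
- move=> c; exfalso; apply: (key q) => A B nA nB.
  by have [y [? ?]] := c _ _ nB nA; exists y.
Qed.

Lemma fan_accessible : accessible_space fanT.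
Proof.
move=> [x|] y xy.
  exists [set Some x]; split; [exact: open_noNone|by rewrite inE|].
  by rewrite inE /= => yx; move: xy; rewrite yx eqxx.
case: y xy => [e|] // _; exists [set x | x <> Some e]; split.
- rewrite openE => z; rewrite /interior.
  case: z => [z|] zE; last exact: nbhs_None_neq.
  by apply: filterS (nbhs_Some z) => w /= ->.
- by rewrite inE.
- by rewrite inE.
Qed.

Lemma fan_normal : normal_space fanT.
Proof.
move=> A clA U AU.
have [AN|nAN] := pselect (A None).
  exists U => //.
  move=> x /closure_fan [//|->]; exact: nbhs_singleton (AU _ AN).
exists A; last first.
  move=> x /clA Ax; exact: nbhs_singleton (AU _ Ax).
move=> [d|] Ad //=; apply: filterS (nbhs_Some d) => y ->; exact: Ad.
Qed.

Lemma fan_creg (R : realType) : completely_regular_space fanT.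
Proof. exact: (@normal_completely_regular R _ fan_normal fan_accessible). Qed.

Lemma fan_not_isolated : ~ isolated [set: fanT] None.
Proof.
move=> [_ [V /nbhs_NoneP [_ [h H]] VE]].
have := H (fun _ => 0%N) (h (fun _ => 0%N)) (leqnn _).
move=> Vs; have : (V `&` setT) (Some (fun _ => 0%N, h (fun _ => 0%N))) by [].
by rewrite VE.
Qed.

Lemma fan_isolated d : isolated [set: fanT] (Some d).
Proof.
split; first by rewrite inE.
by exists [set Some d]; [exact: nbhs_Some|rewrite setIT].
Qed.

Lemma fan_FU (A : set fanT) (x : fanT) : closure A x ->
  exists u : nat -> fanT, (forall n, A (u n)) /\ u @ \oo --> x.
Proof.
move=> cAx.
have [Ax|nAx] := pselect (A x).
  by exists (fun _ => x); split => //; exact: cvg_cst.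
case: x cAx nAx => [d|] cAx nAx.
  by case: (closure_fan cAx) => // -[].
have [s Hs] : exists s, forall n, exists m, (n <= m)%N /\ A (Some (s, m)).
  apply: contrapT => Hn.
  have Hs : forall s, exists n, forall m, (n <= m)%N -> ~ A (Some (s, m)).
    move=> s; apply: contrapT => Hc; apply: Hn; exists s => n.
    apply: contrapT => Hd; apply: Hc; exists n => m nm Am; apply: Hd.
    by exists m.
  have [h Hh] := choice Hs.
  have : nbhs (None : fanT) (~` A).
    by apply/nbhs_NoneP; split => //; exists h => s m hm; apply: Hh.
  by move=> /cAx [y [Ay nAy]].
have [g Hg] := choice Hs.
exists (fun n => Some (s, g n)); split; first by move=> n; case: (Hg n).
move=> V /nbhs_NoneP [_ [h H]].
exists (h s) => // n /= hn; apply: H.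
by apply: leq_trans hn _; case: (Hg n).
Qed.
Notation X := (fanT * fanT)%type.
Definition cst (k : nat) : nat -> nat := fun _ => k.
Definition wpt (f : nat -> nat) (k : nat) : X := (Some (cst k, f k), Some (f, k)).
Definition W : set X := [set x | exists f k, x = wpt f k].
Definition fcomp (x : X) : nat -> nat := if x.2 is Some (f, _) then f else cst 0.

Fixpoint mx (G : nat -> nat -> nat) k n :=
  if n is n'.+1 then maxn (mx G k n') (G n k) else G 0%N k.

Lemma mx_ge G k i n : (i <= n)%N -> (G i k <= mx G k n)%N.
Proof.
elim: n => [|n IH]; first by rewrite leqn0 => /eqP ->.
rewrite leq_eqVlt => /orP [/eqP ->|]; first by rewrite /= leq_maxr.
by rewrite ltnS => /IH H; apply: leq_trans H _; rewrite /= leq_maxl.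
Qed.

Lemma avoid (G : nat -> (nat -> nat)) : exists h1 h2 : (nat -> nat) -> nat,
  forall n k, ~ ((h1 (cst k) <= G n k)%N /\ (h2 (G n) <= k)%N).
Proof.
have : forall f, exists p, (exists n, G n = f) -> G p = f.
  move=> f; have [[n Hn]|nH] := pselect (exists n, G n = f).
    by exists n.
  by exists 0%N => H; exfalso; apply: nH.
move=> /choice [P HP].
exists (fun s => (mx (fun i k => G i k) (s 0%N) (s 0%N)).+1), P.
move=> n k [h1k h2k].
have GP : G (P (G n)) = G n by apply: HP; exists n.
have := mx_ge (fun i k => G i k) k h2k; rewrite /= GP => H.
by have := leq_trans h1k H; rewrite /cst ltnn.
Qed.

Definition fnb (h : (nat -> nat) -> nat) : set fanT :=
  [set y | forall s m, y = Some (s, m) -> (h s <= m)%N].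

Lemma nbhs_fnb h : nbhs (None : fanT) (fnb h).
Proof.
apply/nbhs_NoneP; split; first by move=> s m.
by exists h => s m hm s' m' [<- <-].
Qed.

Lemma nbhs_X (P Q : set fanT) (x : X) : nbhs x.1 P -> nbhs x.2 Q ->
  nbhs x (P `*` Q).
Proof. by move=> nP nQ; exists (P, Q). Qed.

Lemma support_nbhs (G : nat -> (nat -> nat)) (x : X) :
  nbhs x [set x] \/ nbhs x [set y | ~ (W y /\ exists n, fcomp y = G n)].
Proof.
case: x => [[a|] [b|]].
- left; have := nbhs_X (x := (Some a, Some b)) (nbhs_Some a) (nbhs_Some b).
  by apply: filterS => -[y1 y2] [/= -> ->].
- right; case: a => s m.
  have := nbhs_X (x := (Some (s, m), None)) (nbhs_Some (s, m)) (nbhs_fnb (fun _ => (s 0%N).+1)).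
  apply: filterS => -[y1 y2] [/= -> H2] [[f [k E]] _].
  case: E => E1 E2 E3.
  have := H2 _ _ E3; by rewrite E1 /cst ltnn.
- right; case: b => t j.
  have := nbhs_X (x := (None, Some (t, j))) (nbhs_fnb (fun _ => (t j).+1)) (nbhs_Some (t, j)).
  apply: filterS => -[y1 y2] [/= H1 E0]; rewrite E0 => -[[f [k E]] _].
  case: E => E1 E3 E4.
  by have := H1 _ _ E1; rewrite E3 E4 ltnn.
- right; have [h1 [h2 H]] := avoid G.
  have := nbhs_X (x := (None, None)) (nbhs_fnb h1) (nbhs_fnb h2).
  apply: filterS => -[y1 y2] [/= H1 H2] [[f [k E]] [n /= Fn]].
  case: E => E1 E2; subst.
  apply: (H n k); split.
    by rewrite -Fn; apply: (H1 _ _ erefl).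
  by rewrite -Fn; apply: (H2 _ _ erefl).
Qed.

Lemma W_None_closure (N : set X) : nbhs ((None, None) : X) N ->
  exists y, W y /\ N y.
Proof.
move=> [[P Q] [/= /nbhs_NoneP [_ [h1 H1]] /nbhs_NoneP [_ [h2 H2]]] PQN].
pose f := fun k => h1 (cst k); pose k := h2 f.
exists (wpt f k); split; first by exists f, k.
by apply: PQN; split; [apply: H1|apply: H2].
Qed.
Local Open Scope ring_scope.

Lemma inf_seq (T : choiceType) (B : set T) : infinite_set B ->
  exists u : nat -> T, injective u /\ (forall n, B (u n)).
Proof.
move=> Binf; have /infiniteP/card_leP[f] := Binf.
have mn : forall n : nat, n \in [set: nat] by move=> n; rewrite inE.
exists (fun n => \val (f (exist _ n (mn n)))); split.
  move=> n m /val_inj /(@inj _ _ _ f) H.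
  have := congr1 \val (H (mem_set I) (mem_set I)); done.
move=> n; exact: set_mem (valP (f (exist _ n (mn n)))).
Qed.

Section R.
Variable R : realType.

Lemma nbhs_neq (a b : R) : a != b -> nbhs a (~` [set b]).
Proof.
move=> ab; apply: open_nbhs_nbhs; split.
  exact/closed_openC/accessible_closed_set1/hausdorff_accessible/Rhausdorff.
by move=> /= E; rewrite E eqxx in ab.
Qed.

Lemma cont_support (g : X -> R) (S : set X) : (forall y, g y != 0 -> S y) ->
  (forall x : X, nbhs x [set x] \/ nbhs x (~` S)) -> continuous g.
Proof.
move=> supp H x V nV.
have g0 : forall y, ~ S y -> g y = 0.
  by move=> y nS; have [//|/supp] := eqVneq (g y) 0.
case: (H x) => Nx.
  by apply: filterS Nx => y ->; exact: nbhs_singleton nV.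
have gx := g0 _ (nbhs_singleton Nx).
apply: filterS Nx => y nSy /=; rewrite (g0 _ nSy) -gx.
exact: nbhs_singleton nV.
Qed.

Definition chi (l : seq X) : X -> R := fun x => if x \in l then 1 else 0.

Lemma chi_cont l : (forall x, x \in l -> W x) -> continuous (chi l).
Proof.
move=> lW.
apply: (@cont_support _ [set y | W y /\ exists n, fcomp y = (fun n => fcomp (nth (None,None) l n)) n]).
  move=> y; rewrite /chi; case: ifP => yl; last by rewrite eqxx.
  move=> _; split; [exact: lW|]; exists (index y l); by rewrite nth_index.
move=> x; case: (support_nbhs (fun n => fcomp (nth (None, None) l n)) x) => H; [left|right] => //.
Qed.

Definition chiW : X -> R := fun x => if `[< W x >] then 1 else 0.

Lemma chiW_ncont : ~ continuous chiW.
Proof.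
move=> /(_ (None, None)) c.
have W0 : chiW (None, None) = 0.
  by rewrite /chiW; case: asboolP => // -[f [k []]].
have N : nbhs ((None, None) : X) (chiW @^-1` (~` [set 1])).
  apply: c; rewrite W0; apply: nbhs_neq; by rewrite eq_sym oner_neq0.
have [y [Wy Ny]] := W_None_closure N.
by apply: Ny; rewrite /chiW; case: asboolP.
Qed.

Definition mkCp (g : X -> R) (H : continuous g) : Cp R X :=
  exist _ (g : {ptws X -> R}) (mem_set H).

Definition ev (x : X) (f : Cp R X) : R := (\val f : X -> R) x.

Lemma ev_cont x : continuous (ev x).
Proof.
move=> f.
have h1 := @initial_continuous _ _ (@set_val _ [set f : {ptws X -> R} | continuous (f : X -> R)]) f.
have h2 := @proj_continuous X (fun _ => R) x (\val f).
exact: (continuous_comp h1 h2).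
Qed.

Definition Aset : set (Cp R X) :=
  [set f | exists l : seq X, (forall x, x \in l -> W x) /\ (\val f : X -> R) = chi l].


Lemma Aset_lp (B : set (Cp R X)) : B `<=` Aset -> infinite_set B ->
  exists g, limit_point B g.
Proof.
move=> BA Binf.
have [u [uinj uB]] := inf_seq Binf.
have : forall n, exists l, (forall x, x \in l -> W x) /\ (\val (u n) : X -> R) = chi l.
  by move=> n; exact: BA (uB n).
move=> /choice [l Hl].
pose G p := if (unpickle p : option (nat * nat)) is Some (n, j)
  then fcomp (nth (None, None) (l n) j) else cst 0.
pose U := [set x : X | exists n, x \in l n].
pose Kx := fun x : X => if `[< U x >] then [set (0:R); 1] else [set (0:R)].
have Kc : forall x, compact (Kx x).
  move=> x; rewrite /Kx; case: ifP => _; last exact: compact_set1.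
  by apply: compactU; exact: compact_set1.
have Kcomp := tychonoff Kc.
pose F := (fun n => (\val (u n) : {ptws X -> R})) @ \oo.
have PF : ProperFilter F by apply: fmap_proper_filter; exact: eventually_filter.
have FK : F [set f : {ptws X -> R} | forall i, Kx i (f i)].
  exists 0%N => // n _ x; rewrite /= (Hl n).2 /chi /Kx.
  have [xl|xl] := boolP (x \in l n).
    have Ux : U x by exists n.
    by rewrite (asboolT Ux); right.
  by case: (asboolP (U x)) => _ /=; [left|].
have [g [Kg cg]] := Kcomp F PF FK.
have gc : continuous (g : X -> R).
  apply: (@cont_support g [set y | W y /\ exists n, fcomp y = G n]).
    move=> y gy; have := Kg y; rewrite /Kx; case: asboolP => [[n yn] _|_ /= gy0].
      split; first exact: (Hl n).1 y yn.
      exists (pickle (n, index y (l n))); by rewrite /G pickleK nth_index.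
    by rewrite gy0 eqxx in gy.
  move=> x; exact: support_nbhs G x.
exists (mkCp gc); move=> Vs [Os [[Op oOp Ope] Og OV]].
have nO : nbhs g Op by apply: open_nbhs_nbhs; split => //; move: Og; rewrite -Ope.
have FN : F [set \val (u n) | n in [set n | u n != mkCp gc]].
  have [[n0 e]|ne] := pselect (exists n0, u n0 = mkCp gc).
    exists n0.+1 => // n /= n0n; exists n => //; apply/eqP => une.
    have := uinj n n0; rewrite une e => /(_ erefl) nn0.
    by move: n0n; rewrite nn0 ltnn.
  exists 0%N => // n _; exists n => //; apply/eqP => e; apply: ne; by exists n.
have [_ [[n un <-] On]] := cg _ _ FN nO.
exists (u n); split; [exact: un | exact: uB | by apply: OV; rewrite -Ope].
Qed.


Lemma not_g : ~ g_space (Cp R X).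
Proof.
move=> Hg.
have Acomp := Hg Aset (fun B BA Binf => Aset_lp BA Binf).
pose D := fun L : seq X => forall x, x \in L -> W x.
pose Bs := fun L : seq X => [set f : Cp R X | exists l, (forall x, x \in l -> W x) /\
  {subset L <= l} /\ (\val f : X -> R) = chi l].
have PFF : ProperFilter (filter_from D Bs).
  apply: filter_from_proper.
    apply: filter_from_filter; first by exists [::].
    move=> i j Di Dj; exists (i ++ j).
      by move=> x; rewrite mem_cat => /orP [/Di|/Dj].
    move=> f [l [lW [sub fl]]]; split; exists l; split => //; split => // x xi;
      by apply: sub; rewrite mem_cat xi ?orbT.
  move=> L DL; exists (mkCp (chi_cont DL)); exists L; split => //; split => //.
have FFA : filter_from D Bs (closure Aset).
  exists [::] => // f [l [lW [_ fl]]]; apply: subset_closure; by exists l.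
have [g [_ cg]] := Acomp _ PFF FFA.
have gW : forall x, (\val g : X -> R) x = chiW x.
  move=> x; apply: contrapT => neq.
  have Nb : nbhs g (ev x @^-1` (~` [set chiW x])).
    by apply: ev_cont; apply: nbhs_neq; apply/eqP.
  have FB : filter_from D Bs (ev x @^-1` [set chiW x]).
    case: (pselect (W x)) => Wx.
      exists [:: x]; first by move=> y; rewrite inE => /eqP ->.
      move=> f [l [_ [sub fl]]]; rewrite /preimage /= /ev fl /chi (sub x (mem_head _ _)).
      by rewrite /chiW asboolT.
    exists [::] => // f [l [lW [_ fl]]]; rewrite /preimage /= /ev fl /chi /chiW asboolF //.
    by case: ifP => // /lW.
  by have [f [ff nf]] := cg _ _ FB Nb; apply: nf.
apply: chiW_ncont.
have : continuous (\val g : X -> R) by exact: set_mem (valP g).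
by have -> : (\val g : X -> R) = chiW by apply: funext.
Qed.

End R.

Theorem mainTheorem7 (R : realType) :
  exists Z : topologicalType,
    [/\ tychonoff_space Z, almost_discrete Z, frechet_urysohn Z &
        ~ weakly_grothendieck R (Z * Z)%type].
Proof.
exists fanT; split.
- split; [exact: (fan_creg R)|exact: fan_hausdorff].
- exists None; split; first exact: fan_not_isolated.
  by move=> [d|] // nd; exfalso; apply: nd; exact: fan_isolated.
- exact: fan_FU.
- exact: not_g.
Qed.
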